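(* For all terms $M,N$: if $M\sim_{\alpha s} N$ then $M\sim_\alpha N$.
   Context: Let $\mathcal V$ (the variables) be a type with decidable equality, equipped with functions $\mathrm{encode}:\mathcal V\to\mathbb N$ and $\mathrm{decode}:\mathbb N\to\mathcal V$ such that $\mathrm{encode}(\mathrm{decode}\,n)=n$ for all $n$. Let $\mathcal C$ (the constants) be any type. Terms $\Lambda$ are generated by: $c\,k$ ($k\in\mathcal C$), $v\,x$ ($x\in\mathcal V$), $\lambda[x:A]M$, $\Pi[x:A]B$ and $M\cdot N$; in $\lambda[x:A]M$ and $\Pi[x:A]B$ the name $x$ binds in $M$ (resp. $B$) but not in $A$. Terms are raw first-order syntax (not identified up to renaming of bound variables) and $\equiv$ denotes syntactic identity. The list of free variables is $\mathrm{fv}(c\,k)=[\,]$, $\mathrm{fv}(v\,x)=[x]$, $\mathrm{fv}(\lambda[x:A]M)=\mathrm{fv}\,A\mathbin{+\!\!+}(\mathrm{fv}\,M-x)$, $\mathrm{fv}(\Pi[x:A]B)=\mathrm{fv}\,A\mathbin{+\!\!+}(\mathrm{fv}\,B-x)$, $\mathrm{fv}(M\cdot N)=\mathrm{fv}\,M\mathbin{+\!\!+}\mathrm{fv}\,N$, where $\mathbin{+\!\!+}$ is list concatenation and $xs-x$ deletes every occurrence of $x$ from $xs$. Fix a function $\chi':\mathrm{List}\,\mathbb N\to\mathbb N$ with $\chi'(ns)\notin ns$ for every list $ns$, and put $X'(xs)=\mathrm{decode}(\chi'(\mathrm{map}\ \mathrm{encode}\ xs))$. A substitution is any function $\sigma:\mathcal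 V\to\Lambda$; $\iota=v$ is the identity substitution; $(\sigma,x:=N)(y)=N$ if $y=x$ and $\sigma\,y$ otherwise. For a substitution $\sigma$ and a list $xs$ of variables, $X(\sigma,xs)=X'(\text{concatenation of the lists }\mathrm{fv}(\sigma\,y)\text{ for }y\in xs)$. The action $M\bullet\sigma$ is defined by structural recursion: $c\,k\bullet\sigma=c\,k$; $v\,x\bullet\sigma=\sigma\,x$; $(M\cdot N)\bullet\sigma=(M\bullet\sigma)\cdot(N\bullet\sigma)$; $(\lambda[x:A]M)\bullet\sigma=\lambda[y:A\bullet\sigma](M\bullet(\sigma,x:=v\,y))$ with $y=X(\sigma,\mathrm{fv}\,M-x)$; $(\Pi[x:A]B)\bullet\sigma=\Pi[y:A\bullet\sigma](B\bullet(\sigma,x:=v\,y))$ with $y=X(\sigma,\mathrm{fv}\,B-x)$. Unary substitution is $M[x:=N]=M\bullet(\iota,x:=N)$. $\alpha$-conversion $\sim_\alpha$ is the inductively defined relation with rules: $c\,k\sim_\alpha c\,k$; $v\,x\sim_\alpha v\,x$; $M\cdot N\sim_\alpha M'\cdot N'$ if $M\sim_\alpha M'$ and $N\sim_\alpha N'$; $\lambda[x:A]M\sim_\alpha\lambda[x':A']M'$ if $A\sim_\alpha A'$ and there is a variable $y$ with $y\notin\mathrm{fv}\,M-x$, $y\notin\mathrm{fv}\,M'-x'$ and $M[x:=v\,y]\equiv M'[x':=v\,y]$; and the same rule with $\Pi$ in place of $\lambda$. The relation $\sim_{\alpha s}$ is defined inductively by the same rules as $\sim_\alpha$ (with $\sim_{\alpha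 s}$ in place of $\sim_\alpha$ in the premises), except that in the rules for $\lambda$ and $\Pi$ the premise $M[x:=v\,y]\equiv M'[x':=v\,y]$ is replaced by $M[x:=v\,y]\sim_{\alpha s}M'[x':=v\,y]$ (the side conditions $y\notin\mathrm{fv}\,M-x$, $y\notin\mathrm{fv}\,M'-x'$ and $A\sim_{\alpha s}A'$ are kept). *)

(* Defs.v *)
From Stdlib Require Import List Arith.
Import ListNotations.
Set Implicit Arguments.

Record VarStruct := {
  V :> Type;
  V_eq_dec : forall x y : V, {x = y} + {x <> y};
  encode : V -> nat;
  decode : nat -> V;
  encode_decode : forall n, encode (decode n) = n;
  chi' : list nat -> nat;
  chi'_fresh : forall ns, ~ In (chi' ns) ns
}.

Section Terms.
Variable Vs : VarStruct.
Variable C : Type.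

Inductive term : Type :=
| tc : C -> term
| tv : Vs -> term
| tlam : Vs -> term -> term -> term
| tpi : Vs -> term -> term -> term
| tapp : term -> term -> term.

Definition rm (xs : list Vs) (x : Vs) : list Vs :=
  filter (fun y => if V_eq_dec Vs y x then false else true) xs.

Fixpoint fv (M : term) : list Vs :=
  match M with
  | tc _ => []
  | tv x => [x]
  | tlam x A M => fv A ++ rm (fv M) x
  | tpi x A B => fv A ++ rm (fv B) x
  | tapp M N => fv M ++ fv N
  end.

Definition X' (xs : list Vs) : Vs := decode Vs (chi' Vs (map (encode Vs) xs)).

Definition subst := Vs -> term.

Definition iota : subst := tv.

Definition upd (s : subst) (x : Vs) (N : term) : subst :=
  fun y => if V_eq_dec Vs y x then N else s y.

Definition Xs (s : subst) (xs : list Vs) : Vs :=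
  X' (flat_map (fun y => fv (s y)) xs).

Fixpoint act (M : term) (s : subst) : term :=
  match M with
  | tc k => tc k
  | tv x => s x
  | tapp M N => tapp (act M s) (act N s)
  | tlam x A M =>
      let y := Xs s (rm (fv M) x) in
      tlam y (act A s) (act M (upd s x (tv y)))
  | tpi x A B =>
      let y := Xs s (rm (fv B) x) in
      tpi y (act A s) (act B (upd s x (tv y)))
  end.

Definition usubst (M : term) (x : Vs) (N : term) : term := act M (upd iota x N).

Inductive alpha : term -> term -> Prop :=
| alpha_c : forall k, alpha (tc k) (tc k)
| alpha_v : forall x, alpha (tv x) (tv x)
| alpha_app : forall M N M' N', alpha M M' -> alpha N N' ->
    alpha (tapp M N) (tapp M' N')
| alpha_lam : forall x x' A A' M M' y, alpha A A' ->
    ~ In y (rm (fv M) x) -> ~ In y (rm (fv M') x') ->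
    usubst M x (tv y) = usubst M' x' (tv y) ->
    alpha (tlam x A M) (tlam x' A' M')
| alpha_pi : forall x x' A A' M M' y, alpha A A' ->
    ~ In y (rm (fv M) x) -> ~ In y (rm (fv M') x') ->
    usubst M x (tv y) = usubst M' x' (tv y) ->
    alpha (tpi x A M) (tpi x' A' M').

Inductive alpha_s : term -> term -> Prop :=
| alphas_c : forall k, alpha_s (tc k) (tc k)
| alphas_v : forall x, alpha_s (tv x) (tv x)
| alphas_app : forall M N M' N', alpha_s M M' -> alpha_s N N' ->
    alpha_s (tapp M N) (tapp M' N')
| alphas_lam : forall x x' A A' M M' y, alpha_s A A' ->
    ~ In y (rm (fv M) x) -> ~ In y (rm (fv M') x') ->
    alpha_s (usubst M x (tv y)) (usubst M' x' (tv y)) ->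
    alpha_s (tlam x A M) (tlam x' A' M')
| alphas_pi : forall x x' A A' M M' y, alpha_s A A' ->
    ~ In y (rm (fv M) x) -> ~ In y (rm (fv M') x') ->
    alpha_s (usubst M x (tv y)) (usubst M' x' (tv y)) ->
    alpha_s (tpi x A M) (tpi x' A' M').
End Terms.

(* Main.v *)
Require Import Defs.
From Stdlib Require Import List Arith.
Import ListNotations.

Lemma In_rm (Vs : VarStruct) (l : list Vs) (x u : Vs) :
  In u (rm Vs l x) <-> In u l /\ u <> x.
Proof.
  unfold rm. rewrite filter_In.
  destruct (V_eq_dec Vs u x); intuition congruence.
Qed.

Lemma Xs_fresh (Vs : VarStruct) (C : Type) (s : subst Vs C) (xs : list Vs) :
  ~ In (Xs s xs) (flat_map (fun y => fv (s y)) xs).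
Proof.
  unfold Xs, X'. intro H.
  apply (chi'_fresh Vs (map (encode Vs) (flat_map (fun y => fv (s y)) xs))).
  rewrite <- (encode_decode Vs (chi' Vs _)).
  apply in_map. exact H.
Qed.

Lemma flat_map_ext_in {A B : Type} (f g : A -> list B) (l : list A) :
  (forall a, In a l -> f a = g a) -> flat_map f l = flat_map g l.
Proof.
  induction l; simpl; intros H; auto.
  rewrite H by auto. f_equal. apply IHl; auto.
Qed.

Lemma act_ext (Vs : VarStruct) (C : Type) (M : term Vs C) :
  forall s t : subst Vs C, (forall u, In u (fv M) -> s u = t u) -> act M s = act M t.
Proof.
  induction M; intros s t H; simpl in *; auto.
  - rewrite (IHM1 s t) by (intros; apply H; apply in_or_app; auto).
    assert (E : Xs s (rm Vs (fv M2) v) = Xs t (rm Vs (fv M2) v)).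
    { unfold Xs. f_equal. apply flat_map_ext_in. intros a Ha. rewrite H; auto.
      apply in_or_app; right; auto. }
    rewrite E. f_equal. apply IHM2. intros u Hu. unfold upd.
    destruct (V_eq_dec Vs u v); auto. apply H. apply in_or_app; right.
    apply In_rm; auto.
  - rewrite (IHM1 s t) by (intros; apply H; apply in_or_app; auto).
    assert (E : Xs s (rm Vs (fv M2) v) = Xs t (rm Vs (fv M2) v)).
    { unfold Xs. f_equal. apply flat_map_ext_in. intros a Ha. rewrite H; auto.
      apply in_or_app; right; auto. }
    rewrite E. f_equal. apply IHM2. intros u Hu. unfold upd.
    destruct (V_eq_dec Vs u v); auto. apply H. apply in_or_app; right.
    apply In_rm; auto.
  - rewrite (IHM1 s t), (IHM2 s t); auto; intros; apply H; apply in_or_app; auto.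
Qed.

Lemma rm_app (Vs : VarStruct) (l1 l2 : list Vs) x :
  rm Vs (l1 ++ l2) x = rm Vs l1 x ++ rm Vs l2 x.
Proof. unfold rm. apply filter_app. Qed.

Lemma rm_notin (Vs : VarStruct) (l : list Vs) y : ~ In y l -> rm Vs l y = l.
Proof.
  induction l; simpl; intros H; auto. unfold rm; simpl.
  destruct (V_eq_dec Vs a y). { exfalso; auto. }
  f_equal. apply IHl; auto.
Qed.

Lemma rm_cons (Vs : VarStruct) a (l : list Vs) y :
  rm Vs (a :: l) y = if V_eq_dec Vs a y then rm Vs l y else a :: rm Vs l y.
Proof. unfold rm; simpl. destruct (V_eq_dec Vs a y); auto. Qed.

Lemma rm_flat_upd (Vs : VarStruct) (C : Type) (s : subst Vs C) x y (l : list Vs) :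
  ~ In y (flat_map (fun u => fv (s u)) (rm Vs l x)) ->
  rm Vs (flat_map (fun u => fv (upd s x (tv Vs C y) u)) l) y
  = flat_map (fun u => fv (s u)) (rm Vs l x).
Proof.
  induction l as [|a l IH]; simpl; intros H; auto.
  rewrite rm_app. unfold upd at 1.
  destruct (V_eq_dec Vs a x).
  - simpl. unfold rm at 1; simpl. destruct (V_eq_dec Vs y y); [|congruence].
    apply IH. exact H.
  - simpl in H |- *. rewrite IH.
    + f_equal. apply rm_notin. intro; apply H; apply in_or_app; auto.
    + intro; apply H; apply in_or_app; auto.
Qed.

Lemma fv_act (Vs : VarStruct) (C : Type) (M : term Vs C) :
  forall s, fv (act M s) = flat_map (fun u => fv (s u)) (fv M).
Proof.
  induction M; intros s; simpl; auto.
  - rewrite app_nil_r; auto.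
  - rewrite flat_map_app, IHM1, IHM2, rm_flat_upd; auto. apply Xs_fresh.
  - rewrite flat_map_app, IHM1, IHM2, rm_flat_upd; auto. apply Xs_fresh.
  - rewrite flat_map_app, IHM1, IHM2; auto.
Qed.

Lemma flat_map_assoc {A B D : Type} (f : A -> list B) (g : B -> list D) (l : list A) :
  flat_map g (flat_map f l) = flat_map (fun a => flat_map g (f a)) l.
Proof. induction l; simpl; auto. rewrite flat_map_app, IHl; auto. Qed.

Lemma act_comp_bind (Vs : VarStruct) (C : Type) (A M2 : term Vs C) v
  (IHM1 : forall s t, act (act A s) t = act A (fun u => act (s u) t))
  (IHM2 : forall s t, act (act M2 s) t = act M2 (fun u => act (s u) t))
  (s t : subst Vs C) :
  let y := Xs s (rm Vs (fv M2) v) in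
  let z := Xs t (rm Vs (fv (act M2 (upd s v (tv Vs C y)))) y) in
  let w := Xs (fun u => act (s u) t) (rm Vs (fv M2) v) in
  z = w /\ act (act A s) t = act A (fun u => act (s u) t) /\
  act (act M2 (upd s v (tv Vs C y))) (upd t y (tv Vs C z)) =
  act M2 (upd (fun u => act (s u) t) v (tv Vs C w)).
Proof.
  intros y z w.
  assert (Hy := Xs_fresh Vs C s (rm Vs (fv M2) v)). fold y in Hy.
  assert (Ezw : z = w).
  { unfold z, w, Xs. rewrite fv_act, rm_flat_upd by exact Hy.
    rewrite flat_map_assoc. f_equal. apply flat_map_ext_in. intros a _.
    rewrite fv_act. reflexivity. }
  split; [exact Ezw|]. split; [apply IHM1|].
  rewrite IHM2. apply act_ext. intros u Hu. unfold upd at 2.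
  destruct (V_eq_dec Vs u v).
  - subst u. unfold upd. simpl. destruct (V_eq_dec Vs v v); [|congruence].
    simpl. destruct (V_eq_dec Vs y y); [|congruence]. rewrite Ezw; auto.
  - unfold upd at 1 2. destruct (V_eq_dec Vs u v); [congruence|].
    apply act_ext. intros u' Hu'. unfold upd.
    destruct (V_eq_dec Vs u' y); auto. subst u'. exfalso. apply Hy.
    apply in_flat_map. exists u. split; auto. apply In_rm; auto.
Qed.

Lemma act_comp (Vs : VarStruct) (C : Type) (M : term Vs C) :
  forall s t, act (act M s) t = act M (fun u => act (s u) t).
Proof.
  induction M; intros s t; simpl; auto.
  - destruct (act_comp_bind Vs C M1 M2 v IHM1 IHM2 s t) as [E1 [E2 E3]].
    simpl. rewrite E3, E2, E1. reflexivity.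
  - destruct (act_comp_bind Vs C M1 M2 v IHM1 IHM2 s t) as [E1 [E2 E3]].
    simpl. rewrite E3, E2, E1. reflexivity.
  - rewrite IHM1, IHM2; auto.
Qed.

Lemma flat_map_single (Vs : VarStruct) (C : Type) (l : list Vs) :
  flat_map (fun u => fv (iota Vs C u)) l = l.
Proof. induction l as [|a l IHl]; [reflexivity|]. simpl. f_equal. exact IHl. Qed.

Lemma fv_iota (Vs : VarStruct) (C : Type) (P : term Vs C) :
  fv (act P (iota Vs C)) = fv P.
Proof. rewrite fv_act. exact (flat_map_single Vs C (fv P)). Qed.

Lemma usubst_idem (Vs : VarStruct) (C : Type) (M : term Vs C) x y :
  act (usubst M x (tv Vs C y)) (iota Vs C) = usubst M x (tv Vs C y).
Proof.
  unfold usubst. rewrite act_comp. apply act_ext. intros u _.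
  unfold upd. destruct (V_eq_dec Vs u x); reflexivity.
Qed.

Lemma rm_usubst (Vs : VarStruct) (C : Type) (M : term Vs C) x y :
  ~ In y (rm Vs (fv M) x) ->
  rm Vs (fv (usubst M x (tv Vs C y))) y = rm Vs (fv M) x.
Proof.
  intros H. unfold usubst. rewrite fv_act.
  rewrite rm_flat_upd; rewrite flat_map_single; auto.
Qed.

Lemma act_via_usubst (Vs : VarStruct) (C : Type) (M : term Vs C) x y s w :
  ~ In y (rm Vs (fv M) x) ->
  act M (upd s x (tv Vs C w)) = act (usubst M x (tv Vs C y)) (upd s y (tv Vs C w)).
Proof.
  intros H. unfold usubst. rewrite act_comp. apply act_ext. intros u Hu.
  unfold upd. destruct (V_eq_dec Vs u x).
  - simpl. destruct (V_eq_dec Vs y y); congruence.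
  - simpl. destruct (V_eq_dec Vs u y); auto. subst u. exfalso. apply H.
    apply In_rm; auto.
Qed.

Lemma bind_case (Vs : VarStruct) (C : Type) (M M' : term Vs C) x x' y
  (H1 : ~ In y (rm Vs (fv M) x)) (H2 : ~ In y (rm Vs (fv M') x'))
  (IH : forall s, act (usubst M x (tv Vs C y)) s = act (usubst M' x' (tv Vs C y)) s)
  (s : subst Vs C) :
  Xs s (rm Vs (fv M) x) = Xs s (rm Vs (fv M') x') /\
  forall w, act M (upd s x (tv Vs C w)) = act M' (upd s x' (tv Vs C w)).
Proof.
  split.
  - rewrite <- (rm_usubst Vs C M x y H1), <- (rm_usubst Vs C M' x' y H2).
    rewrite <- (fv_iota Vs C (usubst M x _)), <- (fv_iota Vs C (usubst M' x' _)), IH.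
    reflexivity.
  - intros w. rewrite (act_via_usubst Vs C M x y s w H1), (act_via_usubst Vs C M' x' y s w H2).
    apply IH.
Qed.

Lemma alpha_s_act (Vs : VarStruct) (C : Type) (M N : term Vs C) :
  alpha_s M N -> forall s, act M s = act N s.
Proof.
  induction 1; intros s; simpl; auto.
  - rewrite IHalpha_s1, IHalpha_s2; auto.
  - destruct (bind_case Vs C M M' x x' y H0 H1 IHalpha_s2 s) as [E F].
    rewrite E, IHalpha_s1, F. reflexivity.
  - destruct (bind_case Vs C M M' x x' y H0 H1 IHalpha_s2 s) as [E F].
    rewrite E, IHalpha_s1, F. reflexivity.
Qed.

Theorem mainTheorem8 (Vs : VarStruct) (C : Type) (M N : term Vs C) :
  alpha_s M N -> alpha M N.
Proof.
  induction 1.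
  - constructor.
  - constructor.
  - constructor; auto.
  - apply alpha_lam with y; auto.
    rewrite <- usubst_idem, <- (usubst_idem Vs C M' x' y).
    apply alpha_s_act; auto.
  - apply alpha_pi with y; auto.
    rewrite <- usubst_idem, <- (usubst_idem Vs C M' x' y).
    apply alpha_s_act; auto.
Qed.
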